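(* Let $L=\mathcal{F}(P)$ be a finite distributive lattice and let $K$ be a cutting of $L$. Then for all $k$, $$d_k((L\boxplus K)\boxplus K)=d_k(L\boxplus K)+d_{k-2}(K)$$ and $$d_k^-(L\boxplus K)=d_k^-(L)+d_{k-1}^-(K).$$
   Context: For a finite poset $P$, $\mathcal{F}(P)$ is the set of filters (up-sets) of $P$ ordered by reverse inclusion; every finite distributive lattice is isomorphic to some $\mathcal{F}(P)$. A cutting of a finite distributive lattice $L$ is an interval $K=[\hat0_K,\hat1_K]$ of $L$ such that every maximal chain of $L$ meets $K$. For a cutting $K$ of $L=\mathcal{F}(P)$, let $S=\hat0_K\setminus\hat1_K$, $S_0$ the set of maximal elements of $P\setminus\hat0_K$, $S_1$ the set of minimal elements of $\hat1_K$. The poset $P_K$ is $P\cup\{x_K\}$ ($x_K$ new) where the order on $P$ is unchanged, $z<x_K$ iff $z\le s$ for some $s\in S_0$, $x_K<y$ iff $y\ge s$ for some $s\in S_1$, and $x_K$ is incomparable to every element of $S$; the convex expansion is $L\boxplus K:=\mathcal{F}(P_K)$. The lattice $(L\boxplus K)\boxplus K$ is the expansion of $L\boxplus K$ by the copy of $K$ in it, namely $\mathcal{F}(P')$ where $P'=P\cup\{x_1,x_2\}$ ($x_1,x_2$ new) with the order of $P$ unchanged, $x_1<x_2$, $z<x_1$ iff $z\le s$ for some $s\in S_0$, $x_2<y$ iff $y\ge s$ for some $s\in S_1$ (and then $z<x_2$, $x_1<y$ accordingly), and $x_1,x_2$ incomparable to every element of $S$. For a finite lattice $M$ and $a\in M$: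 $\deg^-_M(a)$ is the number of elements covering $a$, $\deg^+_M(a)$ the number of elements covered by $a$, $\deg_M(a)=\deg^-_M(a)+\deg^+_M(a)$; $d_k^-(M)$ (resp. $d_k(M)$) is the number of $a\in M$ with $\deg^-_M(a)=k$ (resp. $\deg_M(a)=k$), and these are $0$ for negative $k$. *)

(* Defs.v *)
From mathcomp Require Import all_boot all_order all_algebra.
Set Implicit Arguments. Unset Strict Implicit. Unset Printing Implicit Defensive.
Import GRing.Theory Num.Theory.

Section FinPoset.
Variables (X : finType) (S : {set X}) (r : rel X).

Definition covby (x y : X) : bool :=
  [&& x \in S, y \in S, r x y, x != y &
      [forall z in S, ~~ [&& r x z, r z y, z != x & z != y]]].

Definition deg_minus (x : X) : nat := #|[set y in S | covby x y]|.
Definition deg_plus (x : X) : nat := #|[set y in S | covby y x]|.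
Definition deg (x : X) : nat := deg_minus x + deg_plus x.

(* d_k^-(M) and d_k(M), indexed by integers (0 for negative k) *)
Definition dminus (k : int) : nat := #|[set x in S | Posz (deg_minus x) == k]|.
Definition dtot (k : int) : nat := #|[set x in S | Posz (deg x) == k]|.

Definition is_chain (C : {set X}) : bool :=
  (C \subset S) && [forall x in C, forall y in C, r x y || r y x].
Definition maximal_chain (C : {set X}) : bool :=
  is_chain C && [forall D : {set X}, is_chain D && (C \subset D) ==> (D == C)].

Definition lat_interval (lo hi : X) : {set X} := [set x in S | r lo x && r x hi].

Definition cutting (lo hi : X) : Prop :=
  [/\ lo \in S, hi \in S, r lo hi &
      forall C, maximal_chain C -> exists2 x, x \in C & x \in lat_interval lo hi].
End FinPoset.

Definition filters (T : finType) (le : rel T) : {set {set T}} :=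
  [set A : {set T} | [forall x in A, forall y, le x y ==> (y \in A)]].

Definition revincl (T : finType) : rel {set T} := fun A B => B \subset A.

Section Expansion.
Variables (T : finType) (le : rel T) (a b : {set T}).
(* a = 0_K, b = 1_K (as filters of P) *)

Definition S0 : {set T} :=
  [set s | (s \notin a) && [forall t, ((t \notin a) && le s t) ==> (t == s)]].
Definition S1 : {set T} :=
  [set s | (s \in b) && [forall t, ((t \in b) && le t s) ==> (t == s)]].

(* P_K = P + {x_K}, with x_K = None *)
Definition leK (u v : option T) : bool :=
  match u, v with
  | Some z, Some y => le z y
  | Some z, None => [exists s in S0, le z s]
  | None, Some y => [exists s in S1, le s y]
  | None, None => true
  end.

(* P' = P + {x1, x2}, with x1 = inr false, x2 = inr true *)
Definition leKK (u v : T + bool) : bool :=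
  match u, v with
  | inl z, inl y => le z y
  | inl z, inr _ => [exists s in S0, le z s]
  | inr _, inl y => [exists s in S1, le s y]
  | inr i, inr j => (~~ i) || j
  end.
End Expansion.

(* Main.v *)
Require Import Defs.
From mathcomp Require Import all_boot all_order all_algebra.
From mathcomp Require Import zify.
Set Implicit Arguments. Unset Strict Implicit. Unset Printing Implicit Defensive.

Lemma filP (X : finType) (r : rel X) (A : {set X}) :
  reflect (forall x y, x \in A -> r x y -> y \in A) (A \in filters r).
Proof.
rewrite inE; apply: (iffP forallP) => [H x y xA rxy | H x].
  by have /implyP/(_ xA)/forallP/(_ y)/implyP := H x; apply.
by apply/implyP => xA; apply/forallP => y; apply/implyP; apply: H.
Qed.

Lemma filE (X : finType) (r : rel X) (A : {set X}) x y :
  A \in filters r -> x \in A -> r x y -> y \in A.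
Proof. by move/filP; apply. Qed.

Lemma chainP (X : finType) (S : {set {set X}}) (C : {set {set X}}) :
  is_chain S (@revincl X) C ->
  (C \subset S) /\ forall F G, F \in C -> G \in C -> (G \subset F) || (F \subset G).
Proof.
case/andP => CS /forall_inP H; split => // F G FC GC.
by have /forall_inP/(_ G GC) := H F FC.
Qed.

Section Gen.
Variables (X : finType) (r : rel X).
Hypotheses (r_refl : reflexive r) (r_anti : antisymmetric r) (r_trans : transitive r).

Lemma exists_max (A : {set X}) x : x \in A ->
  exists2 m, m \in A & forall y, y \in A -> r m y -> y = m.
Proof.
move=> xA.
case: (arg_minnP (fun m => #|[set y in A | r m y]|) xA) => m mA0 mmin.
have mA : m \in A by [].
exists m => // y yA rmy; apply/eqP; apply/negPn/negP => ney.
have := mmin y yA; rewrite leqNgt => /negP; apply; apply: proper_card.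
apply/properP; split.
  apply/subsetP => t; rewrite !inE => /andP[tA ryt]; rewrite tA /=.
  exact: r_trans ryt.
exists m; first by rewrite !inE mA r_refl.
rewrite !inE mA /=; apply/negP => rym.
by move/negP: ney; apply; apply/eqP; apply: r_anti; rewrite rmy rym.
Qed.

Lemma covby_fil (F G : {set X}) :
  covby (filters r) (@revincl X) F G =
  [&& F \in filters r, G \in filters r, G \subset F & #|F :\: G| == 1].
Proof.
rewrite /covby /revincl.
case FL: (F \in filters r) => //=; case GL: (G \in filters r) => //=.
case GF: (G \subset F) => //=.
apply/idP/idP.
  case/andP => neFG /forall_inP Hz.
  have : F :\: G != set0.
    apply: contra neFG => /eqP e; rewrite eqEsubset GF andbT.
    apply/subsetP => t tF; apply/negPn/negP => tG.
    have : t \in F :\: G by rewrite inE tG tF.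
    by rewrite e inE.
  case/set0Pn => x0 x0FG.
  have [m mFG mmax] := exists_max x0FG.
  apply/negPn/negP => ncard.
  have Hm := Hz (m |: G).
  have mF : m \in F by move: mFG; rewrite inE => /andP[].
  have mG : m \notin G by move: mFG; rewrite inE => /andP[].
  have : m |: G \in filters r.
    apply/filP => x y /setU1P [-> | xG] rxy; last first.
      by rewrite inE (filE GL xG rxy) orbT.
    have yF : y \in F := filE FL mF rxy.
    apply/setU1P; case yG: (y \in G); first by right.
    by left; apply: mmax => //; rewrite inE yG yF.
  move/Hm; apply/negP; rewrite negbK.
  rewrite subUset sub1set mF GF subsetUr /=.
  apply/andP; split.
    apply/negP => /eqP e.
    move: ncard; apply/negP; rewrite negbK.
    apply/cards1P; exists m; apply/setP => t; rewrite !inE -e !inE.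
    case: (t =P m) => [-> | _] /=; first by rewrite mG.
    by rewrite andNb.
  apply/negP => /eqP e; move: mG; rewrite -e.
  by rewrite setU11.
move/cards1P => [m em].
have mFG : m \in F :\: G by rewrite em inE.
move: (mFG); rewrite inE => /andP[mG mF].
apply/andP; split.
  by apply/negP => /eqP e; move: mG; rewrite -e mF.
apply/forall_inP => H HL; apply/negP => /and4P[HF GH neHF neHG].
case mH: (m \in H).
  move/negP: neHF; apply; apply/eqP; apply/eqP; rewrite eqEsubset HF /=.
  apply/subsetP => t tF; case tG: (t \in G); first exact: (subsetP GH).
  have : t \in F :\: G by rewrite inE tG tF.
  by rewrite em inE => /eqP ->.
move/negP: neHG; apply; apply/eqP; apply/eqP; rewrite eqEsubset GH andbT.
apply/subsetP => t tH; case tG: (t \in G) => //.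
have : t \in F :\: G by rewrite inE tG (subsetP HF).
by rewrite em inE => /eqP et; move: mH; rewrite -et tH.
Qed.

End Gen.

Section Gen2.
Variables (X : finType) (S : {set {set X}}).
Hypothesis Hc : forall F G, covby S (@revincl X) F G =
   [&& F \in S, G \in S, G \subset F & #|F :\: G| == 1].

Lemma deg_minus_gen F : F \in S ->
  deg_minus S (@revincl X) F = #|[set m in F | F :\ m \in S]|.
Proof.
move=> FS; rewrite /deg_minus.
have -> : [set y in S | covby S (@revincl X) F y] =
          (fun m => F :\ m) @: [set m in F | F :\ m \in S].
  apply/setP => G; rewrite inE Hc FS /=; apply/idP/imsetP.
    case/and4P => GS _ GF /cards1P [m em].
    have : m \in F :\: G by rewrite em inE.
    rewrite inE => /andP[mG mF].
    have eG : G = F :\ m.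
      apply/setP => t; rewrite !inE.
      case tG: (t \in G).
        rewrite (subsetP GF t tG) andbT; apply/esym/negP => /eqP e.
        by move: mG; rewrite -e tG.
      case tF: (t \in F); rewrite ?andbF //= andbT.
      apply/esym/negPn.
      have : t \in F :\: G by rewrite inE tG tF.
      by rewrite em inE => ->.
    by exists m => //; rewrite inE mF -eG.
  case=> m; rewrite inE => /andP[mF mS] ->.
  apply/and4P; split => //; first exact: subD1set.
  apply/cards1P; exists m.
  apply/setP => t; rewrite !inE; case: (t =P m) => [-> | _] //=.
  by rewrite andNb.
rewrite card_in_imset // => m1 m2; rewrite !inE => /andP[m1F _] /andP[m2F _] e.
apply/eqP; apply/negPn/negP => ne.
have : m1 \in F :\ m2.
  by rewrite !inE m1F andbT.
by rewrite -e setD11.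
Qed.

Lemma deg_plus_gen F : F \in S ->
  deg_plus S (@revincl X) F = #|[set m | (m \notin F) && (m |: F \in S)]|.
Proof.
move=> FS; rewrite /deg_plus.
have -> : [set y in S | covby S (@revincl X) y F] =
          (fun m => m |: F) @: [set m | (m \notin F) && (m |: F \in S)].
  apply/setP => G; rewrite inE Hc FS /=; apply/idP/imsetP.
    case/and4P => GS _ FG /cards1P [m em].
    have : m \in G :\: F by rewrite em inE.
    rewrite inE => /andP[mF mG].
    have eG : G = m |: F.
      apply/setP => t; rewrite !inE.
      case tF: (t \in F); first by rewrite (subsetP FG t tF) orbT.
      rewrite orbF; case tG: (t \in G).
        have : t \in G :\: F by rewrite inE tG tF.
        by rewrite em inE => ->.
      by apply/esym/negP => /eqP e; move: mG; rewrite -e tG.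
    by exists m => //; rewrite inE mF -eG.
  case=> m; rewrite inE => /andP[mF mS] ->.
  apply/and4P; split => //; first exact: subsetUr.
  apply/cards1P; exists m.
  apply/setP => t; rewrite !inE; case: (t =P m) => [-> | _] //=.
  by rewrite mF.
  by rewrite andNb.
rewrite card_in_imset // => m1 m2; rewrite !inE => /andP[m1F _] /andP[m2F _] e.
have : m1 \in m2 |: F by rewrite -e setU11.
case/setU1P => // m1in; by move: m1F; rewrite m1in.
Qed.

End Gen2.

Section Cut.
Variables (T : finType) (le : rel T).
Hypotheses (le_refl : reflexive le) (le_anti : antisymmetric le) (le_tr : transitive le).
Variables (a b : {set T}).

Lemma cut_below : cutting (filters le) (@revincl T) a b ->
  forall z y, z \notin a -> y \in b -> le z y.
Proof.
move=> [aL bL ba Hc] z y za yb; apply/negPn/negP => nzy.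
pose good (F : {set T}) := (y \in F) ==> (z \in F).
pose gc (C : {set {set T}}) := is_chain (filters le) (@revincl T) C && [forall F in C, good F].
have gc0 : gc set0.
  rewrite /gc /is_chain sub0set /=; apply/andP; split; apply/forall_inP => ?; by rewrite inE.
case: (@arg_maxnP _ set0 gc (fun C : {set {set T}} => #|C|) gc0) => C gC Cmax.
have gC' : gc C by [].
move: (gC') => /andP[/chainP [CL Cch] /forall_inP Cgood].
have absorb : forall H, H \in filters le -> good H ->
   (forall F, F \in C -> (H \subset F) || (F \subset H)) -> H \in C.
  move=> H HL gH Hcomp; apply/negPn/negP => HC.
  have : gc (H |: C).
    apply/andP; split; last first.
      apply/forall_inP => F /setU1P [-> // | FC]; exact: Cgood.
    apply/andP; split; first by rewrite subUset sub1set HL CL.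
    apply/forall_inP => F FHC; apply/forall_inP => G GHC.
    move: FHC GHC => /setU1P [-> | FC] /setU1P [-> | GC].
    - by rewrite /revincl subxx.
    - by rewrite /revincl orbC Hcomp.
    - by rewrite /revincl Hcomp.
    - by rewrite /revincl; apply: Cch.
  by move/Cmax; rewrite cardsU1 HC /= add1n ltnn.
have Cmaxch : maximal_chain (filters le) (@revincl T) C.
  apply/andP; split; first by case/andP: gC'.
  apply/forallP => D; apply/implyP => /andP[Dch CD].
  have [DL Dc] := chainP Dch.
  rewrite eqEsubset CD andbT; apply/subsetP => H HD.
  have HL : H \in filters le by apply: (subsetP DL).
  have Hcomp : forall F, F \in C -> (H \subset F) || (F \subset H).
    by move=> F FC; apply: Dc => //; apply: (subsetP CD).
  case gH : (good H); first exact: absorb.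
  move: gH; rewrite /good; case yH: (y \in H) => //=; move/negbT => zH.
  pose H3 := (H :\: [set t | le t y]) :|: [set t | le z t].
  have H3L : H3 \in filters le.
    apply/filP => t u; rewrite !inE => /orP[/andP[nty tH] | zt] tu.
      rewrite (filE HL tH tu) andbT; apply/orP; left.
      by apply: contra nty => uy; apply: le_tr uy.
    by rewrite (le_tr zt tu) orbT.
  have zH3 : z \in H3 by rewrite !inE le_refl orbT.
  have yH3 : y \notin H3 by rewrite !inE le_refl /= (negbTE nzy).
  have H3C : H3 \in C.
    apply: absorb => //; first by rewrite /good zH3 implybT.
    move=> F FC; have FL : F \in filters le := subsetP CL F FC.
    case/orP: (Hcomp F FC) => [HF | FH].
      have zF : z \in F by move: (Cgood F FC); rewrite /good (subsetP HF y yH).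
      apply/orP; left; apply/subsetP => t; rewrite !inE => /orP[/andP[_ tH] | zt].
        exact: (subsetP HF).
      exact: (filE FL zF zt).
    have yF : y \notin F.
      apply/negP => yF; move: (Cgood F FC); rewrite /good yF /= => zF.
      by move: zH; rewrite (subsetP FH z zF).
    apply/orP; right; apply/subsetP => t tF; rewrite !inE (subsetP FH t tF) andbT.
    apply/orP; left; apply: contra yF => ty; exact: (filE FL tF ty).
  case/orP: (Dc H H3 HD (subsetP CD _ H3C)) => [H3H | HH3].
    by move: zH; rewrite (subsetP H3H z zH3).
  by move: yH3; rewrite (subsetP HH3 y yH).
have [x xC] := Hc C Cmaxch.
rewrite inE => /andP[xL /andP[xa bx]].
move: (Cgood x xC); rewrite /good (subsetP bx y yb) /= => zx.
by move: za; rewrite (subsetP xa z zx).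
Qed.
End Cut.

Section Main.
Variables (T : finType) (le : rel T).
Hypotheses (le_refl : reflexive le) (le_anti : antisymmetric le) (le_tr : transitive le).
Variables (a b : {set T}).
Hypotheses (aL : a \in filters le) (bL : b \in filters le) (ba : b \subset a)
  (cut : forall z y, z \notin a -> y \in b -> le z y).

Lemma exS0 z : [exists s in S0 le a, le z s] = (z \notin a).
Proof.
apply/idP/idP.
  case/exists_inP => s; rewrite inE => /andP[sa _] zs.
  by apply: contra sa => za; apply: filE aL za zs.
move=> za.
have := exists_max le_refl le_anti le_tr (A := [set t | (t \notin a) && le z t]) (x := z).
rewrite inE za le_refl => /(_ isT) [m]; rewrite inE => /andP[ma zm] mmax.
apply/exists_inP; exists m => //.
rewrite inE ma /=; apply/forallP => t; apply/implyP => /andP[ta mt].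
by apply/eqP; apply: mmax => //; rewrite inE ta (le_tr zm mt).
Qed.

Lemma exS1 y : [exists s in S1 le b, le s y] = (y \in b).
Proof.
apply/idP/idP.
  case/exists_inP => s; rewrite inE => /andP[sb _] sy.
  exact: filE bL sb sy.
move=> yb.
have dr : reflexive (fun u v => le v u) by move=> u; apply: le_refl.
have da : antisymmetric (fun u v => le v u) by move=> u v h; apply: le_anti; rewrite andbC.
have dt : transitive (fun u v => le v u) by move=> v u w h1 h2; apply: le_tr h2 h1.
have := exists_max dr da dt (A := [set t | (t \in b) && le t y]) (x := y).
rewrite inE yb le_refl => /(_ isT) [m]; rewrite inE => /andP[mb my] mmax.
apply/exists_inP; exists m => //.
rewrite inE mb /=; apply/forallP => t; apply/implyP => /andP[tb tm].
by apply/eqP; apply: mmax => //; rewrite inE tb (le_tr tm my).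
Qed.

Lemma leK_refl : reflexive (leK le a b). Proof. by case. Qed.

Lemma leK_anti : antisymmetric (leK le a b).
Proof.
case=> [z|] [y|] //=; rewrite ?exS0 ?exS1.
- by move/le_anti ->.
- by case/andP => za zb; move: za; rewrite (subsetP ba z zb).
- by case/andP => zb za; move: za; rewrite (subsetP ba y zb).
Qed.

Lemma leK_tr : transitive (leK le a b).
Proof.
case=> [y|] [x|] [z|] //=; rewrite ?exS0 ?exS1.
- exact: le_tr.
- by move=> xy; apply: contra => xa; exact: filE aL xa xy.
- by move=> yb yz; exact: filE bL yb yz.
- exact: cut.
Qed.

Lemma leKK_refl : reflexive (leKK le a b). Proof. by case=> //= -[]. Qed.

Lemma leKK_anti : antisymmetric (leKK le a b).
Proof.
case=> [z|i] [y|j] //=; rewrite ?exS0 ?exS1.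
- by move/le_anti ->.
- by case/andP => za zb; move: za; rewrite (subsetP ba z zb).
- by case/andP => zb za; move: za; rewrite (subsetP ba y zb).
- by case: i; case: j.
Qed.

Lemma leKK_tr : transitive (leKK le a b).
Proof.
case=> [y|j] [x|i] [z|k] //=; rewrite ?exS0 ?exS1.
- exact: le_tr.
- by move=> xy; apply: contra => xa; exact: filE aL xa xy.
- by move=> yb yz; exact: filE bL yb yz.
- by move=> yb; rewrite (subsetP ba y yb).
- exact: cut.
- by case: i; case: j; case: k.
Qed.



Definition isfil (X : finType) (r : rel X) (A : {set X}) := A \in filters r.

Definition embO (F : {set T}) (x : bool) : {set option T} :=
  [set u | if u is Some t then t \in F else x].
Definition embS (F : {set T}) (p q : bool) : {set T + bool} :=
  [set u | match u with inl t => t \in F | inr i => if i then q else p end].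

Lemma in_embO F x u : (u \in embO F x) = if u is Some t then t \in F else x.
Proof. by rewrite inE. Qed.
Lemma in_embS F p q u : (u \in embS F p q) =
  match u with inl t => t \in F | inr i => if i then q else p end.
Proof. by rewrite inE. Qed.

Lemma embO_fil F x : isfil (leK le a b) (embO F x) =
  [&& isfil le F, x ==> (b \subset F) & ~~ x ==> (F \subset a)].
Proof.
rewrite /isfil; apply/filP/idP.
  move=> H; apply/and3P; split.
  - apply/filP => t y tF ty; have := H (Some t) (Some y); rewrite !in_embO /=.
    by move/(_ tF ty).
  - apply/implyP => xT; apply/subsetP => y yb; have := H None (Some y).
    by rewrite !in_embO /= exS1 => /(_ xT yb).
  - apply/implyP => nx; apply/subsetP => t tF; apply/negPn/negP => ta.
    have := H (Some t) None; rewrite !in_embO /= exS0 (negbTE nx).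
    by move/(_ tF ta).
case/and3P => FL xb xa [t|] [y|]; rewrite !in_embO /= ?exS0 ?exS1.
- exact: filE FL.
- move=> tF ta; apply/negPn/negP => nx.
  by have := subsetP (implyP xa nx) t tF; rewrite (negbTE ta).
- by move=> xT yb; exact: (subsetP (implyP xb xT)).
- done.
Qed.

Lemma embS_fil F p q : isfil (leKK le a b) (embS F p q) =
  [&& isfil le F, p ==> q, q ==> (b \subset F) & ~~ p ==> (F \subset a)].
Proof.
rewrite /isfil; apply/filP/idP.
  move=> H; apply/and4P; split.
  - apply/filP => t y tF ty; have := H (inl t) (inl y); rewrite !in_embS /=.
    by move/(_ tF ty).
  - apply/implyP => pT; have := H (inr false) (inr true); rewrite !in_embS /=.
    by move/(_ pT isT).
  - apply/implyP => qT; apply/subsetP => y yb; have := H (inr true) (inl y).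
    by rewrite !in_embS /= exS1 => /(_ qT yb).
  - apply/implyP => np; apply/subsetP => t tF; apply/negPn/negP => ta.
    have := H (inl t) (inr false); rewrite !in_embS /= exS0 (negbTE np).
    by move/(_ tF ta).
case/and4P => FL pq qb pa [t|i] [y|j]; rewrite !in_embS /= ?exS0 ?exS1.
- exact: filE FL.
- move=> tF ta.
  have pT : p.
    apply/negPn/negP => np.
    by have := subsetP (implyP pa np) t tF; rewrite (negbTE ta).
  by case: j => //; exact: (implyP pq pT).
- move=> iT yb; have qT : q by case: i iT => // pT; exact: (implyP pq pT).
  exact: (subsetP (implyP qb qT)).
- by case: i; case: j => //= pT _; exact: (implyP pq pT).
Qed.

Lemma embO_D1 F x t : embO F x :\ Some t = embO (F :\ t) x.
Proof. by apply/setP => -[u|]; rewrite !inE. Qed.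
Lemma embO_U1 F x t : Some t |: embO F x = embO (t |: F) x.
Proof. by apply/setP => -[u|]; rewrite !inE. Qed.
Lemma embO_D1N F : embO F true :\ None = embO F false.
Proof. by apply/setP => -[u|]; rewrite !inE. Qed.
Lemma embO_U1N F : None |: embO F false = embO F true.
Proof. by apply/setP => -[u|]; rewrite !inE. Qed.

Lemma embS_D1 F p q t : embS F p q :\ inl t = embS (F :\ t) p q.
Proof. by apply/setP => -[u|[]]; rewrite !inE. Qed.
Lemma embS_U1 F p q t : inl t |: embS F p q = embS (t |: F) p q.
Proof. by apply/setP => -[u|[]]; rewrite !inE. Qed.
Lemma embS_D1f F q : embS F true q :\ inr false = embS F false q.
Proof. by apply/setP => -[u|[]]; rewrite !inE. Qed.
Lemma embS_D1t F p : embS F p true :\ inr true = embS F p false.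
Proof. by apply/setP => -[u|[]]; rewrite !inE. Qed.
Lemma embS_U1f F q : inr false |: embS F false q = embS F true q.
Proof. by apply/setP => -[u|[]]; rewrite !inE. Qed.
Lemma embS_U1t F p : inr true |: embS F p false = embS F p true.
Proof. by apply/setP => -[u|[]]; rewrite !inE. Qed.

Lemma cardO (X : {set option T}) :
  #|X| = #|[set t | Some t \in X]| + (None \in X).
Proof.
rewrite (cardsD1 None) addnC; congr (_ + _).
have -> : X :\ None = Some @: [set t | Some t \in X].
  apply/setP => -[u|]; rewrite !inE /=.
    by rewrite mem_imset; [rewrite inE | exact: Some_inj].
  by apply/esym/imsetP => -[t _].
by rewrite card_imset //; exact: Some_inj.
Qed.

Lemma cardS (X : {set T + bool}) :
  #|X| = #|[set t | inl t \in X]| + (inr false \in X) + (inr true \in X).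
Proof.
rewrite (cardsD1 (inr false)) (cardsD1 (inr true)) !inE /=.
have -> : X :\ inr false :\ inr true = inl @: [set t | inl t \in X].
  apply/setP => -[u|[]]; rewrite !inE /=.
  - by rewrite mem_imset; [rewrite inE | move=> ? ? []].
  - by apply/esym/imsetP => -[t _].
  - by apply/esym/imsetP => -[t _].
rewrite card_imset; last by move=> ? ? [].
by case: (inr false \in X); case: (inr true \in X); rewrite /= ?addn0 ?add0n ?addn1 ?add1n ?addnS.
Qed.


Lemma card_sum (Y : finType) (P : pred Y) : #|[set y | P y]| = \sum_y P y.
Proof.
rewrite -sum1_card big_mkcond /=; apply: eq_bigr => y _; rewrite inE.
by case: (P y).
Qed.

Lemma sumO (f : {set option T} -> nat) :
  \sum_G f G = \sum_F (f (embO F true) + f (embO F false)).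
Proof.
rewrite (reindex (fun p : {set T} * bool => embO p.1 p.2)) /=; last first.
  exists (fun G : {set option T} => ([set t | Some t \in G], None \in G)) => [[F x] _ | G _] /=.
    by congr pair; [apply/setP => t; rewrite !inE | rewrite in_embO].
  by apply/setP => -[t|]; rewrite !inE.
rewrite -(pair_big xpredT xpredT (fun F x => f (embO F x))) /=.
by apply: eq_bigr => F _; rewrite big_bool.
Qed.

Lemma sumS (f : {set T + bool} -> nat) :
  \sum_G f G = \sum_F (f (embS F true true) + f (embS F true false) +
                       (f (embS F false true) + f (embS F false false))).
Proof.
rewrite (reindex (fun p : {set T} * (bool * bool) => embS p.1 p.2.1 p.2.2)) /=; last first.
  exists (fun G : {set T + bool} => ([set t | inl t \in G], (inr false \in G, inr true \in G)))
    => [[F [p q]] _ | G _] /=.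
    by congr pair; [apply/setP => t; rewrite !inE | rewrite !in_embS].
  by apply/setP => -[t|[]]; rewrite !inE.
rewrite -(pair_big xpredT xpredT (fun F pq => f (embS F pq.1 pq.2))) /=.
apply: eq_bigr => F _.
rewrite -(pair_big xpredT xpredT (fun p q => f (embS F p q))) /=.
by rewrite big_bool /= !big_bool.
Qed.

Lemma inK F : (F \in lat_interval (filters le) (@revincl T) a b) =
  [&& isfil le F, F \subset a & b \subset F].
Proof. by rewrite /lat_interval in_set /revincl andbA. Qed.


Local Notation K := (lat_interval (filters le) (@revincl T) a b).

Lemma covby_K F G : covby K (@revincl T) F G =
  [&& F \in K, G \in K, G \subset F & #|F :\: G| == 1].
Proof.
case FK: (F \in K); last by rewrite /covby FK.
case GK: (G \in K); last by rewrite /covby FK GK andbF.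
move: (FK) (GK); rewrite !inK => /and3P[FL Fa bF] /and3P[GL Ga bG].
have FL' : F \in filters le := FL.
have GL' : G \in filters le := GL.
have := covby_fil le_refl le_anti le_tr F G; rewrite FL' GL' /= => <-.
rewrite /covby FK GK FL' GL' /=.
congr (_ && (_ && _)).
apply/forall_inP/forall_inP => H z zS.
  apply/negP => /and4P[zF Gz nzF nzG].
  have zK : z \in K by have zS' : isfil le z := zS; rewrite inK zS' (subset_trans zF Fa) (subset_trans bG Gz).
  by move/negP: (H z zK); apply; apply/and4P.
by apply: H; move: zS; rewrite inK => /and3P[].
Qed.

Lemma degmL F : isfil le F ->
  deg_minus (filters le) (@revincl T) F = #|[set t in F | isfil le (F :\ t)]|.
Proof. move=> FL; exact: (deg_minus_gen (covby_fil le_refl le_anti le_tr) FL). Qed.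
Lemma degpL F : isfil le F ->
  deg_plus (filters le) (@revincl T) F = #|[set t | (t \notin F) && isfil le (t |: F)]|.
Proof. move=> FL; exact: (deg_plus_gen (covby_fil le_refl le_anti le_tr) FL). Qed.
Lemma degmK F : F \in K ->
  deg_minus K (@revincl T) F = #|[set t in F | (F :\ t) \in K]|.
Proof. move=> FL; exact: (deg_minus_gen covby_K FL). Qed.
Lemma degpK F : F \in K ->
  deg_plus K (@revincl T) F = #|[set t | (t \notin F) && ((t |: F) \in K)]|.
Proof. move=> FL; exact: (deg_plus_gen covby_K FL). Qed.

Lemma degmO F x : isfil (leK le a b) (embO F x) ->
  deg_minus (filters (leK le a b)) (@revincl _) (embO F x) =
  #|[set t in F | isfil (leK le a b) (embO (F :\ t) x)]| +
  (x && isfil (leK le a b) (embO F false)).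
Proof.
move=> GL.
rewrite (deg_minus_gen (covby_fil leK_refl leK_anti leK_tr) GL
  : _ = #|[set m in embO F x | isfil (leK le a b) (embO F x :\ m)]|) cardO.
congr (_ + _).
  by apply: eq_card => t; rewrite !inE embO_D1.
by case: x GL => GL; rewrite !inE ?embO_D1N.
Qed.


Lemma degpO F x : isfil (leK le a b) (embO F x) ->
  deg_plus (filters (leK le a b)) (@revincl _) (embO F x) =
  #|[set t | (t \notin F) && isfil (leK le a b) (embO (t |: F) x)]| +
  (~~ x && isfil (leK le a b) (embO F true)).
Proof.
move=> GL.
rewrite (deg_plus_gen (covby_fil leK_refl leK_anti leK_tr) GL
  : _ = #|[set m | (m \notin embO F x) && isfil (leK le a b) (m |: embO F x)]|) cardO.
congr (_ + _).
  by apply: eq_card => t; rewrite !inE embO_U1.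
by case: x GL => GL; rewrite !inE ?embO_U1N.
Qed.

Lemma degmS F p q : isfil (leKK le a b) (embS F p q) ->
  deg_minus (filters (leKK le a b)) (@revincl _) (embS F p q) =
  #|[set t in F | isfil (leKK le a b) (embS (F :\ t) p q)]| +
  (p && isfil (leKK le a b) (embS F false q)) +
  (q && isfil (leKK le a b) (embS F p false)).
Proof.
move=> GL.
rewrite (deg_minus_gen (covby_fil leKK_refl leKK_anti leKK_tr) GL
  : _ = #|[set m in embS F p q | isfil (leKK le a b) (embS F p q :\ m)]|) cardS.
congr (_ + _ + _).
- by apply: eq_card => t; rewrite !inE embS_D1.
- by case: p GL => GL; rewrite !inE ?embS_D1f.
- by case: q GL => GL; rewrite !inE ?embS_D1t.
Qed.

Lemma degpS F p q : isfil (leKK le a b) (embS F p q) ->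
  deg_plus (filters (leKK le a b)) (@revincl _) (embS F p q) =
  #|[set t | (t \notin F) && isfil (leKK le a b) (embS (t |: F) p q)]| +
  (~~ p && isfil (leKK le a b) (embS F true q)) +
  (~~ q && isfil (leKK le a b) (embS F p true)).
Proof.
move=> GL.
rewrite (deg_plus_gen (covby_fil leKK_refl leKK_anti leKK_tr) GL
  : _ = #|[set m | (m \notin embS F p q) && isfil (leKK le a b) (m |: embS F p q)]|) cardS.
congr (_ + _ + _).
- by apply: eq_card => t; rewrite !inE embS_U1.
- by case: p GL => GL; rewrite !inE ?embS_U1f.
- by case: q GL => GL; rewrite !inE ?embS_U1t.
Qed.


Lemma fil_ff G : isfil (leKK le a b) (embS G false false) = isfil (leK le a b) (embO G false).
Proof. by rewrite embS_fil embO_fil. Qed.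
Lemma fil_tt G : isfil (leKK le a b) (embS G true true) = isfil (leK le a b) (embO G true).
Proof. by rewrite embS_fil embO_fil /= andbT. Qed.

Lemma degmK' F : F \in K -> deg_minus K (@revincl T) F =
  #|[set t in F | [&& isfil le (F :\ t), F :\ t \subset a & b \subset F :\ t]]|.
Proof.
move=> FK; rewrite degmK //; apply: eq_card => t.
by rewrite [LHS]in_set [RHS]in_set inK.
Qed.
Lemma degpK' F : F \in K -> deg_plus K (@revincl T) F =
  #|[set t | (t \notin F) && [&& isfil le (t |: F), t |: F \subset a & b \subset t |: F]]|.
Proof.
move=> FK; rewrite degpK //; apply: eq_card => t.
by rewrite [LHS]in_set [RHS]in_set inK.
Qed.

Lemma D1 F : isfil le F -> F \subset a ->
  deg_minus (filters (leK le a b)) (@revincl _) (embO F false) =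
  deg_minus (filters le) (@revincl T) F.
Proof.
move=> FL Fa.
have GL : isfil (leK le a b) (embO F false) by rewrite embO_fil FL Fa.
rewrite degmO // degmL // addn0; apply: eq_card => t.
by rewrite !inE embO_fil /= (subset_trans (subD1set F t) Fa) andbT.
Qed.

Lemma D2 F : isfil le F -> b \subset F -> ~~ (F \subset a) ->
  deg_minus (filters (leK le a b)) (@revincl _) (embO F true) =
  deg_minus (filters le) (@revincl T) F.
Proof.
move=> FL bF nFa.
have GL : isfil (leK le a b) (embO F true) by rewrite embO_fil FL bF.
rewrite degmO // degmL // embO_fil FL (negbTE nFa) /= addn0.
apply: eq_card => t; rewrite !inE embO_fil /= andbT.
case tF: (t \in F) => //=; case tL: (isfil le (F :\ t)) => //=.
apply/subsetP => u ub; rewrite in_setD1 (subsetP bF u ub) andbT.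
apply/eqP => ut; subst u.
move/subsetPn: nFa => [z zF za].
have zt : le z t := cut za ub.
have zFt : z \in F :\ t.
  rewrite in_setD1 zF andbT; apply/eqP => e; subst z.
  by move: za; rewrite (subsetP ba t ub).
by have := filE tL zFt zt; rewrite setD11.
Qed.

Lemma D3 F : F \in K ->
  deg_minus (filters (leK le a b)) (@revincl _) (embO F true) =
  (deg_minus K (@revincl T) F).+1.
Proof.
move=> FK; move: (FK); rewrite inK => /and3P[FL Fa bF].
have GL : isfil (leK le a b) (embO F true) by rewrite embO_fil FL bF.
rewrite degmO // degmK' // embO_fil FL Fa /= addn1; congr S.
apply: eq_card => t; rewrite !inE embO_fil /= andbT.
by rewrite (subset_trans (subD1set F t) Fa).
Qed.

Lemma E1 F : isfil le F -> F \subset a ->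
  deg (filters (leKK le a b)) (@revincl _) (embS F false false) =
  deg (filters (leK le a b)) (@revincl _) (embO F false).
Proof.
move=> FL Fa.
have GL1 : isfil (leKK le a b) (embS F false false) by rewrite embS_fil FL Fa.
have GL2 : isfil (leK le a b) (embO F false) by rewrite embO_fil FL Fa.
rewrite /deg degmS // degpS // degmO // degpO //.
under eq_finset => t do rewrite fil_ff.
have -> : [set t | (t \notin F) && isfil (leKK le a b) (embS (t |: F) false false)] =
  [set t | (t \notin F) && isfil (leK le a b) (embO (t |: F) false)].
  by apply/eq_finset => t; rewrite fil_ff.
by rewrite !embS_fil !embO_fil FL Fa /= !andbT !addn0.
Qed.

Lemma E2 F : isfil le F -> b \subset F ->
  deg (filters (leKK le a b)) (@revincl _) (embS F true true) =
  deg (filters (leK le a b)) (@revincl _) (embO F true).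
Proof.
move=> FL bF.
have GL1 : isfil (leKK le a b) (embS F true true) by rewrite embS_fil FL bF.
have GL2 : isfil (leK le a b) (embO F true) by rewrite embO_fil FL bF.
rewrite /deg degmS // degpS // degmO // degpO //.
under eq_finset => t do rewrite fil_tt.
have -> : [set t | (t \notin F) && isfil (leKK le a b) (embS (t |: F) true true)] =
  [set t | (t \notin F) && isfil (leK le a b) (embO (t |: F) true)].
  by apply/eq_finset => t; rewrite fil_tt.
by rewrite !embS_fil !embO_fil FL bF /= ?andbT ?addn0.
Qed.

Lemma E3 F : F \in K ->
  deg (filters (leKK le a b)) (@revincl _) (embS F false true) =
  (deg K (@revincl T) F + 2)%N.
Proof.
move=> FK; move: (FK); rewrite inK => /and3P[FL Fa bF].
have GL1 : isfil (leKK le a b) (embS F false true) by rewrite embS_fil FL Fa bF.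
rewrite /deg degmS // degpS // degmK' // degpK' //.
rewrite !embS_fil FL Fa bF /=.
have -> : #|[set t in F | isfil (leKK le a b) (embS (F :\ t) false true)]| =
          #|[set t in F | [&& isfil le (F :\ t), F :\ t \subset a & b \subset F :\ t]]|.
  apply: eq_card => t; rewrite !inE embS_fil /=.
  by case: (isfil le _); case: (_ \subset a); case: (b \subset _).
have -> : #|[set t | (t \notin F) && isfil (leKK le a b) (embS (t |: F) false true)]| =
          #|[set t | (t \notin F) && [&& isfil le (t |: F), t |: F \subset a & b \subset t |: F]]|.
  apply: eq_card => t; rewrite !inE embS_fil /=.
  by case: (isfil le _); case: (_ \subset a); case: (b \subset _).
rewrite !addn0; lia.
Qed.


Lemma isfilE (X : finType) (r : rel X) (A : {set X}) : (A \in filters r) = isfil r A.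
Proof. by []. Qed.

Lemma cutF F : isfil le F -> ~~ (F \subset a) -> b \subset F.
Proof.
move=> FL /subsetPn [z zF za]; apply/subsetP => y yb.
exact: filE FL zF (cut za yb).
Qed.

Lemma posz_shift (d m : nat) (k : int) : (Posz (d + m) == k) = (Posz d == (k - Posz m)%R).
Proof. by rewrite [RHS]eq_sym GRing.subr_eq PoszD eq_sym. Qed.

Lemma part2 k : dminus (filters (leK le a b)) (@revincl _) k =
  (dminus (filters le) (@revincl T) k + dminus K (@revincl T) (k - 1)%R)%N.
Proof using le_refl le_anti le_tr aL bL ba cut.
rewrite /dminus !card_sum sumO -big_split /=; apply: eq_bigr => F _.
rewrite !isfilE !embO_fil inK.
case FL: (isfil le F) => //=.
case Fa: (F \subset a); case bF: (b \subset F) => /=.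
- have FK : F \in K by rewrite inK FL Fa bF.
  by rewrite D3 // D1 // -addn1 posz_shift addnC.
- by rewrite D1 // addn0.
- have nFa : ~~ (F \subset a) by rewrite Fa.
  by rewrite D2 // addn0.
- by have := cutF FL; rewrite Fa bF; move/(_ isT).
Qed.

Lemma part1 k : dtot (filters (leKK le a b)) (@revincl _) k =
  (dtot (filters (leK le a b)) (@revincl _) k + dtot K (@revincl T) (k - 2)%R)%N.
Proof using le_refl le_anti le_tr aL bL ba cut.
rewrite /dtot !card_sum sumS sumO -big_split /=; apply: eq_bigr => F _.
rewrite !isfilE !embS_fil !embO_fil inK.
case FL: (isfil le F) => //=.
case Fa: (F \subset a); case bF: (b \subset F) => /=.
- have FK : F \in K by rewrite inK FL Fa bF.
  rewrite E3 // E1 // E2 // posz_shift addn0 -addnA; congr (_ + _); exact: addnC.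
- by rewrite E1 // !addn0.
- have nFa : ~~ (F \subset a) by rewrite Fa.
  by rewrite E2 // !addn0.
- by have := cutF FL; rewrite Fa bF; move/(_ isT).
Qed.

End Main.

Theorem theorem5 (T : finType) (le : rel T)
    (le_refl : reflexive le) (le_anti : antisymmetric le) (le_trans : transitive le)
    (a b : {set T})
    (hcut : cutting (filters le) (@revincl T) a b) :
  (forall k : int,
      dtot (filters (leKK le a b)) (@revincl _) k =
      (dtot (filters (leK le a b)) (@revincl _) k +
       dtot (lat_interval (filters le) (@revincl T) a b) (@revincl T) (k - 2)%R)%N)
  /\
  (forall k : int,
      dminus (filters (leK le a b)) (@revincl _) k =
      (dminus (filters le) (@revincl T) k +
       dminus (lat_interval (filters le) (@revincl T) a b) (@revincl T) (k - 1)%R)%N).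
Proof.
case: (hcut) => aL bL ba _.
have cut := cut_below le_refl le_trans hcut.
split => k.
- exact: (part1 le_refl le_anti le_trans aL bL ba cut).
- exact: (part2 le_refl le_anti le_trans aL bL ba cut).
Qed.
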